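(* Let $X_1,\dots,X_n$ be independent random variables with values in $\mathbb{Z}_+=\{0,1,2,\dots\}$, and suppose that for each $i$ the probability generating function $M_{X_i}(z)=\mathbb{E}(z^{X_i})$ satisfies $$G_{X_i}(z):=\frac{M_{X_i}'(z)}{M_{X_i}(z)}=\sum_{m=0}^{\infty}a_{i,m+1}z^m .$$ Let $Y=\sum_{i=1}^n X_i$ and $\mu=\sum_{i=1}^n\sum_{m=0}^\infty a_{i,m+1}$ (the mean of $Y$). Let $\alpha>0$ and $p\in(0,1)$, $q=1-p$, satisfy $\alpha q/p=\mu$, and let $Z\sim \mathrm{NB}(\alpha,p)$. Then $$d_{TV}(Y,Z)\le \frac{1}{\alpha q}\sum_{i=1}^n\sum_{l=1}^\infty l\,\bigl|a_{i,l+1}-q\,a_{i,l}\bigr| .$$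
   Context: $\mathrm{NB}(\alpha,p)$ denotes the negative binomial distribution with $\mathbf{P}(Z=m)=\binom{\alpha+m-1}{m}p^\alpha q^m$, $m=0,1,\dots$, where $\alpha>0$, $q=1-p\in(0,1)$. The total variation distance is $d_{TV}(Y,X)=\frac12\sum_{m\ge0}|\mathbf{P}(Y=m)-\mathbf{P}(X=m)|$. *)

(* Defs.v *)
From Stdlib Require Import Reals.
From Coquelicot Require Import Coquelicot.
Open Scope R_scope.

Fixpoint sum_lt (n : nat) (F : nat -> R) : R :=
  match n with
  | O => 0
  | S k => sum_lt k F + F k
  end.

Definition conv (f g : nat -> R) (m : nat) : R :=
  sum_f_R0 (fun k => f k * g (m - k)%nat) m.

Definition delta0 (m : nat) : R := match m with O => 1 | _ => 0 end.

(* pmf_sum f n = law of X_0 + ... + X_{n-1} for independent X_i with pmfs f i. *)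
Fixpoint pmf_sum (f : nat -> nat -> R) (n : nat) : nat -> R :=
  match n with
  | O => delta0
  | S k => conv (pmf_sum f k) (f k)
  end.

Definition is_pmf (f : nat -> R) : Prop :=
  (forall m, 0 <= f m) /\ is_series f 1.

Fixpoint falling (x : R) (m : nat) : R :=
  match m with
  | O => 1
  | S k => falling x k * (x - INR k)
  end.
Definition gbinom (x : R) (m : nat) : R := falling x m / INR (Factorial.fact m).

Definition nb_pmf (alpha p : R) (m : nat) : R :=
  gbinom (alpha + INR m - 1) m * Rpower p alpha * (1 - p) ^ m.

Definition dTV (f g : nat -> R) : R :=
  / 2 * Series (fun m => Rabs (f m - g m)).

Definition pgf (f : nat -> R) (z : R) : R := PSeries f z.

(* Main.v *)
Require Import Defs.
From Stdlib Require Import Reals.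
From Coquelicot Require Import Coquelicot.
From Stdlib Require Import Lra Lia Psatz Arith.
Open Scope R_scope.

Lemma sum_lt_ext n f g : (forall k, (k < n)%nat -> f k = g k) -> sum_lt n f = sum_lt n g.
Proof. induction n; simpl; intros H; auto. rewrite IHn by (intros; apply H; lia). rewrite H by lia. auto. Qed.

Lemma sum_lt_plus n f g : sum_lt n (fun k => f k + g k) = sum_lt n f + sum_lt n g.
Proof. induction n; simpl; [lra|rewrite IHn; lra]. Qed.
Lemma sum_lt_minus n f g : sum_lt n (fun k => f k - g k) = sum_lt n f - sum_lt n g.
Proof. induction n; simpl; [lra|rewrite IHn; lra]. Qed.
Lemma sum_lt_scal n c f : sum_lt n (fun k => c * f k) = c * sum_lt n f.
Proof. induction n; simpl; [lra|rewrite IHn; lra]. Qed.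
Lemma sum_lt_zero n : sum_lt n (fun _ => 0) = 0.
Proof. induction n; simpl; [lra|rewrite IHn; lra]. Qed.
Lemma sum_lt_first n f : sum_lt (S n) f = f O + sum_lt n (fun k => f (S k)).
Proof. induction n; simpl in *; [lra|]. rewrite IHn. lra. Qed.
Lemma sum_lt_le n f g : (forall k, (k < n)%nat -> f k <= g k) -> sum_lt n f <= sum_lt n g.
Proof. induction n; simpl; intros H; [lra|]. assert (f n <= g n) by (apply H; lia).
  assert (sum_lt n f <= sum_lt n g) by (apply IHn; intros; apply H; lia). lra. Qed.
Lemma sum_lt_nonneg n f : (forall k, (k < n)%nat -> 0 <= f k) -> 0 <= sum_lt n f.
Proof. intros H. rewrite <- (sum_lt_zero n). apply sum_lt_le. auto. Qed.
Lemma sum_lt_abs n f : Rabs (sum_lt n f) <= sum_lt n (fun k => Rabs (f k)).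
Proof. induction n; simpl. rewrite Rabs_R0; lra.
  eapply Rle_trans. apply Rabs_triang. lra. Qed.
Lemma sum_lt_mono n m f : (forall k, 0 <= f k) -> (n <= m)%nat -> sum_lt n f <= sum_lt m f.
Proof. intros H Hnm. induction Hnm as [|m Hnm IH]; simpl; [lra|]. specialize (H m). lra. Qed.
Lemma sum_f_R0_lt f m : sum_f_R0 f m = sum_lt (S m) f.
Proof. induction m as [|m IHm]; simpl. lra. rewrite IHm. simpl. lra. Qed.
Lemma sum_n_lt f m : sum_n f m = sum_lt (S m) f.
Proof. rewrite sum_n_Reals. apply sum_f_R0_lt. Qed.
Lemma sum_lt_swap n m (u : nat -> nat -> R) :
  sum_lt n (fun i => sum_lt m (fun k => u i k)) = sum_lt m (fun k => sum_lt n (fun i => u i k)).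
Proof. induction n; simpl. rewrite sum_lt_zero; auto.
  rewrite IHn. rewrite <- sum_lt_plus. auto. Qed.

Lemma is_series_lim f (l : R) : is_series f l -> is_lim_seq (fun N => sum_lt N f) l.
Proof. intros H. apply is_lim_seq_incr_1.
  apply (is_lim_seq_ext (sum_n f)). intros; apply sum_n_lt. exact H. Qed.
Lemma lim_is_series f (l : R) : is_lim_seq (fun N => sum_lt N f) l -> is_series f l.
Proof. intros H. apply is_lim_seq_incr_1 in H.
  apply (is_lim_seq_ext _ (sum_n f)) in H. exact H. intros; rewrite sum_n_lt; auto. Qed.

Lemma partial_le_total f l m : is_series f l -> (forall k, (m <= k)%nat -> 0 <= f k) -> sum_lt m f <= l.
Proof. intros H Hp. apply is_series_lim in H.
  assert (Hc : is_lim_seq (fun _ : nat => sum_lt m f) (sum_lt m f)) by apply is_lim_seq_const.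
  assert (Rbar_le (sum_lt m f) l).
  { apply (is_lim_seq_le_loc _ _ _ _ ) with (2:=Hc) (3:=H). exists m. intros N HN.
    induction HN; [lra|]. simpl. specialize (Hp m0 HN). lra. }
  exact H0. Qed.

Lemma series_nonneg f l : is_series f l -> (forall k, 0 <= f k) -> 0 <= l.
Proof. intros H Hp. apply (partial_le_total f l 0) in H; simpl in *; auto. Qed.

Lemma series_le f g lf lg : is_series f lf -> is_series g lg -> (forall k, f k <= g k) -> lf <= lg.
Proof. intros Hf Hg H. apply is_series_lim in Hf. apply is_series_lim in Hg.
  assert (Rbar_le lf lg). apply (is_lim_seq_le_loc _ _ _ _) with (2:=Hf) (3:=Hg).
  exists O. intros; apply sum_lt_le; auto. exact H0. Qed.

Lemma is_series_sum_lt n (u : nat -> nat -> R) (l : nat -> R) :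
  (forall i, (i < n)%nat -> is_series (u i) (l i)) ->
  is_series (fun k => sum_lt n (fun i => u i k)) (sum_lt n l).
Proof. induction n; intros H; simpl.
  - apply lim_is_series. apply (is_lim_seq_ext (fun _ => 0)). intros N; rewrite sum_lt_zero; auto. apply is_lim_seq_const.
  - apply (is_series_plus (fun k => sum_lt n (fun i => u i k)) (u n)).
    apply IHn. intros; apply H; lia. apply H; lia. Qed.

Lemma is_series_finite_supp (f : nat -> R) m : (forall k, (m <= k)%nat -> f k = 0) ->
  is_series f (sum_lt m f).
Proof. intros H. apply lim_is_series. apply is_lim_seq_ext_loc with (fun _ => sum_lt m f).
  exists m. intros N HN. induction HN; auto. simpl. rewrite H by lia. lra.
  apply is_lim_seq_const. Qed.

Lemma ex_series_abs_le f g : (forall k, Rabs (f k) <= g k) -> ex_series g -> ex_series (fun k => Rabs (f k)).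
Proof. intros H Hg. apply (ex_series_le (fun k => Rabs (f k)) g); auto.
  intros k. change (norm (Rabs (f k))) with (Rabs (Rabs (f k))). rewrite Rabs_Rabsolu. apply H. Qed.

Lemma ex_series_of_abs f : ex_series (fun k => Rabs (f k)) -> ex_series f.
Proof. apply ex_series_Rabs. Qed.

Lemma is_series_Series f : ex_series f -> is_series f (Series f).
Proof. intros [l H]. rewrite (is_series_unique _ _ H). auto. Qed.

Lemma series_abs_le f g lg : (forall k, Rabs (f k) <= g k) -> is_series g lg -> Rabs (Series f) <= lg.
Proof. intros H Hg.
  assert (Ha : ex_series (fun k => Rabs (f k))) by (apply (ex_series_abs_le f g); auto; eexists; eauto).
  eapply Rle_trans. apply Series_Rabs; auto.
  apply (series_le (fun k => Rabs (f k)) g); auto. apply is_series_Series; auto. Qed.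

Lemma is_series_shift f m l : is_series f l -> is_series (fun k => f (m + k)%nat) (l - sum_lt m f).
Proof. intros H. destruct m. simpl. replace (l - 0) with l by lra. apply (is_series_ext f); auto.
  apply is_series_incr_n. lia.
  match goal with |- is_series _ ?x => replace x with l end. exact H.
  rewrite sum_n_lt. cbv [Init.Nat.pred]. change (l = (l - sum_lt (S m) f) + (sum_lt (S m) f)). lra. Qed.

Lemma falling_step x k : falling x (S k) = falling x k * (x - INR k).
Proof. reflexivity. Qed.
Lemma falling_S x k : falling x (S k) = x * falling (x - 1) k.
Proof. revert x. induction k; intros x. simpl. lra.
  rewrite falling_step. rewrite IHk. rewrite (falling_step (x-1)). rewrite S_INR. ring. Qed.

Lemma fact_S_INR m : INR (Factorial.fact (S m)) = INR (S m) * INR (Factorial.fact m).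
Proof. change (Factorial.fact (S m)) with ((S m) * Factorial.fact m)%nat. apply mult_INR. Qed.

Lemma fact_INR_pos m : 0 < INR (Factorial.fact m).
Proof. apply lt_0_INR. apply Factorial.lt_O_fact. Qed.

Lemma nb_S al p m : INR (S m) * nb_pmf al p (S m) = (1 - p) * (al + INR m) * nb_pmf al p m.
Proof. unfold nb_pmf, gbinom.
  replace (al + INR (S m) - 1) with (al + INR m) by (rewrite S_INR; ring).
  rewrite falling_S. rewrite fact_S_INR.
  replace (al + INR m - 1) with (al + INR m - 1) by ring.
  assert (H1 := fact_INR_pos m). assert (0 < INR (S m)) by (apply lt_0_INR; lia).
  simpl pow. field. lra. Qed.

Lemma nb_0 al p : nb_pmf al p 0 = Rpower p al.
Proof. unfold nb_pmf, gbinom. simpl. lra. Qed.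

Lemma Rpower_pos x y : 0 < Rpower x y.
Proof. unfold Rpower. apply exp_pos. Qed.

Lemma nb_S' al p m : nb_pmf al p (S m) = (1 - p) * (al + INR m) / INR (S m) * nb_pmf al p m.
Proof. assert (0 < INR (S m)) by (apply lt_0_INR; lia).
  apply Rmult_eq_reg_l with (INR (S m)). rewrite nb_S. field. lra. lra. Qed.

Lemma nb_pos al p m : 0 < al -> 0 < p < 1 -> 0 < nb_pmf al p m.
Proof. intros Ha Hp. induction m. rewrite nb_0. apply Rpower_pos.
  rewrite nb_S'. assert (0 < INR (S m)) by (apply lt_0_INR; lia).
  assert (0 <= INR m) by apply pos_INR.
  apply Rmult_lt_0_compat; auto. apply Rdiv_lt_0_compat; auto. apply Rmult_lt_0_compat; lra. Qed.

Lemma lim_ratio_aux c : is_lim_seq (fun n => (c + INR n) / INR (S n)) 1.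
Proof.
  apply is_lim_seq_ext with (fun n => 1 + (c - 1) * / INR (S n)).
  { intros n. assert (0 < INR (S n)) by (apply lt_0_INR; lia). rewrite S_INR in *. field. lra. }
  replace (Finite 1) with (Finite (1 + (c - 1) * 0)) by (f_equal; ring).
  apply is_lim_seq_plus'. apply is_lim_seq_const.
  replace (Finite ((c - 1) * 0)) with (Rbar_mult (c - 1) 0) by (simpl; f_equal).
  apply is_lim_seq_scal_l.
  replace (Finite 0) with (Rbar_inv p_infty) by auto.
  apply is_lim_seq_inv. apply (is_lim_seq_incr_1 INR). apply is_lim_seq_INR. discriminate. Qed.

Section NB.
Variables (al p : R).
Hypothesis Hal : 0 < al.
Hypothesis Hp : 0 < p < 1.
Let pi := nb_pmf al p.

Lemma nb_ratio : is_lim_seq (fun n => Rabs (pi (S n) / pi n)) (1 - p).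
Proof.
  apply is_lim_seq_ext with (fun n => (1 - p) * ((al + INR n) / INR (S n))).
  { intros n. unfold pi. assert (Hpos := nb_pos al p n Hal Hp). rewrite nb_S'.
    assert (0 < INR (S n)) by (apply lt_0_INR; lia). assert (0 <= INR n) by apply pos_INR.
    rewrite Rabs_right. field. split; lra.
    apply Rle_ge. unfold Rdiv. rewrite Rmult_assoc, Rinv_r by lra.
    apply Rmult_le_pos. 2: lra. apply Rmult_le_pos. apply Rmult_le_pos; lra. left; apply Rinv_0_lt_compat; lra. }
  replace (Finite (1 - p)) with (Rbar_mult (1 - p) 1) by (simpl; f_equal; ring).
  apply is_lim_seq_scal_l. apply lim_ratio_aux. Qed.

Lemma nb_ex_series : ex_series pi.
Proof. apply ex_series_Rabs. apply ex_series_DAlembert with (1 - p). lra.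
  intros n. apply Rgt_not_eq. apply nb_pos; auto. apply nb_ratio. Qed.

Lemma nb_mom_ratio : is_lim_seq (fun n => Rabs (INR (S (S n)) * pi (S (S n)) / (INR (S n) * pi (S n)))) (1 - p).
Proof.
  apply is_lim_seq_ext with (fun n => (1 - p) * ((al + INR (S n)) / INR (S n))).
  { intros n. unfold pi. rewrite nb_S. rewrite (nb_S al p n). rewrite (nb_S' al p n).
    assert (Hpos := nb_pos al p n Hal Hp).
    assert (0 < INR (S n)) by (apply lt_0_INR; lia). assert (0 <= INR n) by apply pos_INR.
    rewrite S_INR in *.
    match goal with |- ?t = Rabs ?e => assert (E : e = t) end.
    { field. repeat split; intro; nra. }
    rewrite E. rewrite Rabs_right. auto. apply Rle_ge. apply Rmult_le_pos. lra.
    apply Rmult_le_pos. lra. left; apply Rinv_0_lt_compat; lra. }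
  replace (Finite (1 - p)) with (Rbar_mult (1 - p) 1) by (simpl; f_equal; ring).
  apply is_lim_seq_scal_l.
  apply is_lim_seq_ext with (fun n => ((al + 1) + INR n) / INR (S n)).
  intros; rewrite S_INR; f_equal; ring. apply lim_ratio_aux. Qed.

Lemma nb_mom_ex_series : ex_series (fun n => INR n * pi n).
Proof. apply ex_series_incr_1. apply ex_series_Rabs.
  apply ex_series_DAlembert with (1 - p). lra.
  intros n. apply Rgt_not_eq. apply Rmult_lt_0_compat. apply lt_0_INR; lia. apply nb_pos; auto.
  apply nb_mom_ratio. Qed.

End NB.

Section NBsum.
Variables (al p : R).
Hypothesis Hal : 0 < al.
Hypothesis Hp : 0 < p < 1.
Let pi := nb_pmf al p.

Lemma nb_radius : CV_radius pi = Finite (/ (1 - p)).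
Proof. apply CV_radius_finite_DAlembert. intros n; apply Rgt_not_eq, nb_pos; auto. lra.
  apply nb_ratio; auto. Qed.

Lemma nb_in_radius x : Rabs x <= 1 -> Rbar_lt (Rabs x) (CV_radius pi).
Proof. intros H. rewrite nb_radius. simpl.
  assert (1 < / (1 - p)). { rewrite <- Rinv_1. apply Rinv_lt_contravar; lra. } lra. Qed.

Lemma nb_ode x : Rabs x <= 1 ->
  (1 - (1 - p) * x) * PSeries (PS_derive pi) x = (1 - p) * al * PSeries pi x.
Proof. intros Hx.
  assert (Hr := nb_in_radius x Hx).
  assert (E1 : PSeries (PS_derive pi) x =
     PSeries (PS_plus (PS_scal ((1-p)*al) pi) (PS_scal (1-p) (PS_incr_1 (PS_derive pi)))) x).
  { apply PSeries_ext. intros n.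
    assert (H1 : PS_derive pi n = (1-p)*al*pi n + (1-p)*(INR n * pi n)).
    { unfold PS_derive, pi. rewrite nb_S. ring. }
    assert (H2 : PS_incr_1 (PS_derive pi) n = INR n * pi n).
    { destruct n. unfold PS_incr_1. simpl. unfold zero; simpl. ring. unfold PS_incr_1. reflexivity. }
    rewrite H1. unfold PS_plus, PS_scal. rewrite H2. unfold plus, scal; simpl. unfold mult; simpl. ring. }
  rewrite PSeries_plus in E1. rewrite !PSeries_scal in E1. rewrite PSeries_incr_1 in E1.
  rewrite Rmult_minus_distr_r. rewrite E1 at 1. ring.
  - apply ex_pseries_scal. apply Rmult_comm. apply CV_radius_inside; auto.
  - apply ex_pseries_scal. apply Rmult_comm. apply CV_radius_inside.
    rewrite CV_radius_incr_1, CV_radius_derive. auto. Qed.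

Definition hfun x := PSeries pi x * Rpower (1 - (1 - p) * x) al.

Lemma hfun_derive x : 0 <= x <= 1 -> is_derive hfun x 0.
Proof. intros Hx.
  assert (Hax : Rabs x <= 1) by (rewrite Rabs_right; lra).
  assert (Hpos : 0 < 1 - (1 - p) * x) by nra.
  assert (D1 := is_derive_PSeries pi x (nb_in_radius x Hax)).
  assert (D2 : is_derive (fun t => Rpower (1 - (1 - p) * t) al) x
      (scal (- (1 - p)) (al * Rpower (1 - (1 - p) * x) (al - 1)))).
  { apply (is_derive_comp (fun u => Rpower u al) (fun t => 1 - (1 - p) * t)).
    apply is_derive_Reals. apply derivable_pt_lim_power. auto.
    auto_derive. auto. ring. }
  assert (D := is_derive_mult _ _ _ _ _ D1 D2 (fun n m => Rmult_comm n m)).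
  assert (R1 : Rpower (1 - (1 - p) * x) al = Rpower (1 - (1 - p) * x) (al - 1) * (1 - (1 - p) * x)).
  { rewrite <- (Rpower_1 (1 - (1-p)*x)) at 3 by auto. rewrite <- Rpower_plus. f_equal. ring. }
  assert (ODE := nb_ode x Hax).
  apply is_derive_Reals. apply is_derive_Reals in D. unfold hfun.
  replace 0 with (PSeries (PS_derive pi) x * Rpower (1 - (1 - p) * x) al +
     PSeries pi x * (- (1 - p) * (al * Rpower (1 - (1 - p) * x) (al - 1)))).
  exact D.
  rewrite R1.
  transitivity (Rpower (1 - (1 - p) * x) (al - 1) * ((1 - (1 - p) * x) * PSeries (PS_derive pi) x - (1 - p) * al * PSeries pi x)).
  ring. rewrite ODE. ring. Qed.

Lemma nb_sum1 : is_series pi 1.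
Proof.
  destruct (MVT_gen hfun 0 1 (fun _ => 0)) as [c [Hc E]].
  { intros y Hy. rewrite Rmin_left, Rmax_right in Hy by lra. apply hfun_derive. lra. }
  { intros y Hy. rewrite Rmin_left, Rmax_right in Hy by lra. apply continuity_pt_filterlim.
    apply (ex_derive_continuous (K:=R_AbsRing) (V:=R_NormedModule)). eexists. apply hfun_derive. lra. }
  unfold hfun in E. rewrite PSeries_0 in E. replace (1 - (1 - p) * 1) with p in E by ring.
  replace (1 - (1 - p) * 0) with 1 in E by ring.
  assert (R1 : Rpower 1 al = 1) by (unfold Rpower; rewrite ln_1, Rmult_0_r, exp_0; auto).
  rewrite R1 in E. unfold pi in E. rewrite nb_0 in E.
  assert (Hpw := Rpower_pos p al).
  assert (PS1 : PSeries pi 1 = 1).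
  { apply Rmult_eq_reg_r with (Rpower p al). 2: lra. unfold pi. lra. }
  assert (S1 : Series pi = 1).
  { rewrite <- PS1. unfold PSeries. apply Series_ext. intros; rewrite pow1; ring. }
  rewrite <- S1. apply is_series_Series. apply nb_ex_series; auto. Qed.
End NBsum.

From Stdlib Require Import ZArith.

Lemma nat_gt r : exists N : nat, r < INR N.
Proof. destruct (archimed r) as [H1 H2]. destruct (Z_lt_le_dec (up r) 0) as [Hz|Hz].
  - exists O. simpl. apply IZR_lt in Hz. lra.
  - exists (Z.to_nat (up r)). rewrite INR_IZR_INZ. rewrite Z2Nat.id by lia. lra. Qed.

Lemma lim_unique_R (u : nat -> R) (l1 l2 : R) : is_lim_seq u l1 -> is_lim_seq u l2 -> l1 = l2.
Proof. intros H1 H2. apply is_lim_seq_unique in H1. apply is_lim_seq_unique in H2.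
  rewrite H1 in H2. injection H2; auto. Qed.

Section Stein.
Variables (al p : R).
Hypothesis Hal : 0 < al.
Hypothesis Hp : 0 < p < 1.
Definition pi := nb_pmf al p.
Definition lam m := (1 - p) * (al + INR m).
Definition Sl m := sum_lt m pi.
Definition El m := sum_lt m (fun k => INR k * pi k).
Definition Mn := Series (fun k => INR k * pi k).

Lemma pi_pos m : 0 < pi m.
Proof. apply nb_pos; auto. Qed.
Lemma lam_pos m : 0 < lam m.
Proof. unfold lam. assert (0 <= INR m) by apply pos_INR. apply Rmult_lt_0_compat; lra. Qed.
Lemma lam_ge m : (1 - p) * al <= lam m.
Proof. unfold lam. assert (0 <= INR m) by apply pos_INR. nra. Qed.
Lemma pi_S m : INR (S m) * pi (S m) = lam m * pi m.
Proof. apply nb_S. Qed.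

Lemma fin_id m : (1 - p) * al * Sl m = p * El m + INR m * pi m.
Proof. induction m. unfold Sl, El; simpl. ring.
  unfold Sl, El in *; cbn [sum_lt]. rewrite pi_S. unfold lam. lra. Qed.

Lemma Sl_le1 m : Sl m <= 1.
Proof. apply (partial_le_total pi 1 m). apply nb_sum1; auto. intros; left; apply pi_pos. Qed.
Lemma Sl_nonneg m : 0 <= Sl m.
Proof. apply sum_lt_nonneg. intros; left; apply pi_pos. Qed.

Lemma El_le m : El m <= INR m * Sl m.
Proof. unfold El, Sl. rewrite <- sum_lt_scal. apply sum_lt_le. intros k Hk.
  assert (INR k <= INR m) by (apply le_INR; lia). assert (H0 := pi_pos k). nra. Qed.

Lemma mean_id : (1 - p) * al = p * Mn.
Proof.
  assert (H1 : is_lim_seq (fun m => (1 - p) * al * Sl m) ((1 - p) * al * 1)).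
  { apply (is_lim_seq_scal_l _ _ 1). apply is_series_lim. apply nb_sum1; auto. }
  assert (H2 : is_lim_seq (fun m => p * El m + INR m * pi m) (p * Mn + 0)).
  { apply is_lim_seq_plus'. apply (is_lim_seq_scal_l _ _ Mn). apply is_series_lim.
    apply is_series_Series. apply nb_mom_ex_series; auto.
    apply ex_series_lim_0. apply nb_mom_ex_series; auto. }
  assert (E := lim_unique_R _ _ _ H1 (is_lim_seq_ext _ _ _ (fun m => eq_sym (fin_id m)) H2)).
  lra. Qed.

Lemma tail_ineq m : INR m * (1 - Sl m) <= Mn - El m.
Proof.
  assert (Hs : is_series (fun k => INR k * pi k - INR m * pi k) (Mn - INR m * 1)).
  { apply (is_series_minus (fun k => INR k * pi k) (fun k => INR m * pi k)).
    apply is_series_Series. apply nb_mom_ex_series; auto.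
    apply (is_series_scal (V:=R_NormedModule) (INR m) pi 1). apply nb_sum1; auto. }
  assert (H := partial_le_total _ _ m Hs).
  rewrite sum_lt_minus, sum_lt_scal in H. fold (El m) in H. fold (Sl m) in H.
  assert (HH : El m - INR m * Sl m <= Mn - INR m * 1).
  { apply H. intros k Hk. assert (INR m <= INR k) by (apply le_INR; lia). assert (X := pi_pos k). nra. }
  lra. Qed.

Lemma Sl_S m : Sl (S m) = Sl m + pi m.
Proof. reflexivity. Qed.

Lemma stein_S1 m : lam m * Sl m <= INR m * Sl (S m).
Proof. assert (F := fin_id m). assert (E := El_le m). rewrite Sl_S. unfold lam. nra. Qed.

Lemma stein_S2 m : INR m * (1 - Sl (S m)) <= lam m * (1 - Sl m).
Proof. assert (F := fin_id m). assert (M := mean_id). assert (T := tail_ineq m).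
  rewrite Sl_S. unfold lam. nra. Qed.

Lemma stein_S3 m : (0 < m)%nat ->
  (1 - Sl (S m)) / lam m + Sl m / INR m <= / (al * (1 - p)).
Proof. intros Hm. assert (Hm' : 0 < INR m) by (apply lt_0_INR; auto).
  assert (F := fin_id m). assert (E := El_le m). assert (L1 := Sl_le1 (S m)).
  assert (P0 := pi_pos m). assert (S0 := Sl_nonneg m).
  assert (A1 : al * (1 - Sl (S m)) / (al + INR m) <= 1 - Sl (S m)).
  { apply Rmult_le_reg_r with (al + INR m). lra.
    replace (al * (1 - Sl (S m)) / (al + INR m) * (al + INR m)) with (al * (1 - Sl (S m))) by (field; lra). nra. }
  assert (A2 : (1 - p) * al * Sl m / INR m <= Sl (S m)).
  { rewrite F. rewrite Sl_S. apply Rmult_le_reg_r with (INR m). lra.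
    replace ((p * El m + INR m * pi m) / INR m * INR m) with (p * El m + INR m * pi m) by (field; lra).
    assert (0 <= El m). { apply sum_lt_nonneg. intros. assert (X := pi_pos k). assert (0 <= INR k) by apply pos_INR. nra. }
    nra. }
  assert (Hq : 0 < 1 - p) by lra.
  apply Rmult_le_reg_l with (al * (1 - p)). nra. rewrite Rinv_r by nra.
  replace (al * (1 - p) * ((1 - Sl (S m)) / lam m + Sl m / INR m)) with
     (al * (1 - Sl (S m)) / (al + INR m) + (1 - p) * al * Sl m / INR m).
  lra. unfold lam. field. lra. Qed.

Lemma tail_ratio_bound : exists K, 0 < K /\ forall m, (1 - Sl (S m)) / pi m <= K.
Proof.
  destruct (nat_gt (2 * (1 - p) * al / p)) as [N HN].
  exists (2 * (1 - p) * (al + 1) / p + sum_lt (S N) (fun k => / pi k)).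
  assert (Hs : forall n, 0 <= sum_lt n (fun k => / pi k)).
  { intros; apply sum_lt_nonneg. intros; left; apply Rinv_0_lt_compat, pi_pos. }
  assert (Hq : 0 < 1 - p) by lra.
  assert (HK : 0 < 2 * (1 - p) * (al + 1) / p). { apply Rdiv_lt_0_compat; nra. }
  split. specialize (Hs (S N)). lra.
  intros m. assert (P0 := pi_pos m). assert (L1 := Sl_le1 (S m)).
  destruct (le_lt_dec m N) as [Hm|Hm].
  - assert (X : (1 - Sl (S m)) / pi m <= / pi m).
    { unfold Rdiv. assert (0 < / pi m) by (apply Rinv_0_lt_compat; auto). assert (0 <= Sl (S m)) by apply Sl_nonneg. nra. }
    assert (Y : / pi m <= sum_lt (S N) (fun k => / pi k)).
    { clear X. assert (Z : forall n, (m < n)%nat -> / pi m <= sum_lt n (fun k => / pi k)).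
      { intros n Hn. induction Hn. simpl. specialize (Hs m). lra.
        simpl. assert (0 < / pi m0) by (apply Rinv_0_lt_compat, pi_pos). lra. }
      apply Z. lia. }
    specialize (Hs (S N)). lra.
  - assert (Hm' : INR N < INR m) by (apply lt_INR; auto).
    assert (Hm1 : 1 <= INR m) by (replace 1 with (INR 1) by auto; apply le_INR; lia).
    assert (S2 := stein_S2 m). rewrite Sl_S in S2.
    assert (Hpm : 2 * (1 - p) * al < p * INR m).
    { apply Rmult_lt_reg_r with (/ p). apply Rinv_0_lt_compat; lra.
      replace (p * INR m * / p) with (INR m) by (field; lra). unfold Rdiv in HN. lra. }
    assert (Hb : (p * INR m / 2) * (1 - Sl (S m)) <= lam m * pi m).
    { rewrite Sl_S in *. unfold lam in *.
      assert (W : (p * INR m / 2) * (1 - (Sl m + pi m)) <= (p * INR m - (1 - p) * al) * (1 - (Sl m + pi m))).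
      { apply Rmult_le_compat_r; lra. }
      nra. }
    assert (Hlam : lam m <= (1 - p) * (al + 1) * INR m).
    { unfold lam. assert (al * 1 <= al * INR m) by (apply Rmult_le_compat_l; lra).
      rewrite Rmult_assoc. apply Rmult_le_compat_l; lra. }
    specialize (Hs (S N)).
    assert (X : (1 - Sl (S m)) / pi m <= 2 * (1 - p) * (al + 1) / p).
    { apply Rmult_le_reg_r with (pi m * (p * INR m / 2)). apply Rmult_lt_0_compat; [auto|nra].
      replace ((1 - Sl (S m)) / pi m * (pi m * (p * INR m / 2))) with ((p * INR m / 2) * (1 - Sl (S m))) by (field; lra).
      replace (2 * (1 - p) * (al + 1) / p * (pi m * (p * INR m / 2))) with ((1 - p) * (al + 1) * INR m * pi m) by (field; lra).
      nra. }
    lra. Qed.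

End Stein.

Lemma delta_alg u v pm L mm Hm hm R :
  v = u + pm -> 0 < pm -> 0 < L -> 0 < mm -> 0 <= hm <= 1 -> 0 <= Hm <= u -> 0 <= R <= 1 - v ->
  L * u <= mm * v -> mm * (1 - v) <= L * (1 - u) ->
  Rabs (((Hm + hm*pm)*(1-v) - R*v)/(L*pm) - (Hm*(1-u) - (R + hm*pm)*u)/(mm*pm))
    <= (1-v)/L + u/mm.
Proof. intros Ev Hpm HL Hmm Hh HH HR S1 S2.
  set (X := ((Hm + hm*pm)*(1-v) - R*v)/(L*pm) - (Hm*(1-u) - (R + hm*pm)*u)/(mm*pm)).
  set (K1 := v/L - u/mm). set (K2 := (1-v)/L - (1-u)/mm). set (c := (1-v)/L + u/mm).
  assert (I1 : pm * X = Hm * K2 + hm * pm * c - R * K1).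
  { unfold X, K1, K2, c. field. lra. }
  assert (I2 : u * K2 - (1 - v) * K1 = - pm * c).
  { unfold K1, K2, c. rewrite Ev. field. lra. }
  assert (HK1 : 0 <= K1).
  { unfold K1. apply Rmult_le_reg_r with (L * mm). nra.
    replace ((v / L - u / mm) * (L * mm)) with (mm * v - L * u) by (field; lra). lra. }
  assert (HK2 : K2 <= 0).
  { unfold K2. apply Rmult_le_reg_r with (L * mm). nra.
    replace (((1 - v) / L - (1 - u) / mm) * (L * mm)) with (mm * (1 - v) - L * (1 - u)) by (field; lra). lra. }
  assert (Hc : 0 <= c).
  { unfold c. assert (0 <= (1 - v) / L) by (apply Rdiv_le_0_compat; lra).
    assert (0 <= u / mm) by (apply Rdiv_le_0_compat; lra). lra. }
  assert (U : pm * X <= pm * c).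
  { rewrite I1. assert (Hm * K2 <= 0) by nra. assert (0 <= R * K1) by nra.
    assert (hm * pm * c <= pm * c). { assert (0 <= (1 - hm) * (pm * c)) by (apply Rmult_le_pos; nra). nra. }
    lra. }
  assert (Lo : - (pm * c) <= pm * X).
  { rewrite I1. assert (u * K2 <= Hm * K2) by nra. assert (R * K1 <= (1 - v) * K1) by nra.
    assert (0 <= hm * pm * c) by (apply Rmult_le_pos; nra). nra. }
  apply Rabs_le. split; nra. Qed.

Section SteinSol.
Variables (al p : R).
Hypothesis Hal : 0 < al.
Hypothesis Hp : 0 < p < 1.
Variable h : nat -> R.
Hypothesis Hh : forall k, 0 <= h k <= 1.


Definition ph := Series (fun k => h k * pi al p k).
Definition Hl m := sum_lt m (fun k => h k * pi al p k).
Definition Nf m := Hl (S m) - ph * Sl al p (S m).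
Definition g m := match m with O => 0 | S m' => Nf m' / (lam al p m' * pi al p m') end.

Lemma ph_series : is_series (fun k => h k * pi al p k) ph.
Proof. apply is_series_Series. apply ex_series_Rabs. apply (ex_series_abs_le _ (pi al p)).
  intros k. specialize (Hh k). assert (X := pi_pos al p Hal Hp k).
  rewrite Rabs_right; nra. eexists. apply nb_sum1; auto. Qed.

Lemma pi_series : is_series (pi al p) 1.
Proof. apply nb_sum1; auto. Qed.

Lemma R_nonneg m : 0 <= ph - Hl m.
Proof. assert (H := partial_le_total _ _ m ph_series). unfold Hl.
  assert (sum_lt m (fun k => h k * pi al p k) <= ph). apply H. intros. specialize (Hh k).
  assert (X := pi_pos al p Hal Hp k). nra. lra. Qed.

Lemma R_le m : ph - Hl m <= 1 - Sl al p m.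
Proof.
  assert (Hs : is_series (fun k => pi al p k - h k * pi al p k) (1 - ph)).
  { apply (is_series_minus (pi al p) (fun k => h k * pi al p k)). apply pi_series. apply ph_series. }
  assert (H := partial_le_total _ _ m Hs). rewrite sum_lt_minus in H. unfold Hl, Sl.
  assert (sum_lt m (pi al p) - sum_lt m (fun k => h k * pi al p k) <= 1 - ph). apply H.
  intros. specialize (Hh k). assert (X := pi_pos al p Hal Hp k). nra. lra. Qed.

Lemma Hl_bounds m : 0 <= Hl m <= Sl al p m.
Proof. unfold Hl, Sl. split. apply sum_lt_nonneg. intros k _. specialize (Hh k).
  assert (X := pi_pos al p Hal Hp k). nra.
  apply sum_lt_le. intros k _. specialize (Hh k). assert (X := pi_pos al p Hal Hp k). nra. Qed.

Lemma stein_eq m : lam al p m * g (S m) - INR m * g m = h m - ph.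
Proof. assert (L := lam_pos al p Hal Hp m). assert (P := pi_pos al p Hal Hp m).
  destruct m as [|m].
  - simpl g. unfold Nf, Hl, Sl. cbn [sum_lt]. simpl INR. field. lra.
  - assert (L' := lam_pos al p Hal Hp m). assert (P' := pi_pos al p Hal Hp m).
    unfold g. rewrite <- (pi_S al p m).
    assert (0 < INR (S m)) by (apply lt_0_INR; lia).
    unfold Nf, Hl, Sl. cbn [sum_lt]. field. lra. Qed.

Lemma Nf_bound m : Rabs (Nf m) <= 1 - Sl al p (S m).
Proof. assert (R1 := R_nonneg (S m)). assert (R2 := R_le (S m)). assert (H := Hl_bounds (S m)).
  assert (V := Sl_le1 al p Hal Hp (S m)).
  unfold Nf. replace (Hl (S m) - ph * Sl al p (S m)) with
     (Hl (S m) * (1 - Sl al p (S m)) - (ph - Hl (S m)) * Sl al p (S m)) by ring.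
  apply Rabs_le. split; nra. Qed.

Lemma stein_delta m : (0 < m)%nat -> Rabs (g (S m) - g m) <= / (al * (1 - p)).
Proof. intros Hm. destruct m as [|m']. lia.
  set (m := S m').
  assert (S3 := stein_S3 al p Hal Hp m Hm).
  eapply Rle_trans; [|exact S3].
  assert (E1 : g (S m) = ((Hl m + h m * pi al p m) * (1 - Sl al p (S m)) - (ph - Hl (S m)) * Sl al p (S m))
                 / (lam al p m * pi al p m)).
  { unfold g, Nf. f_equal. unfold Hl. cbn [sum_lt]. ring. }
  assert (E2 : g m = (Hl m * (1 - Sl al p m) - ((ph - Hl (S m)) + h m * pi al p m) * Sl al p m)
                 / (INR m * pi al p m)).
  { unfold m. unfold g. rewrite <- (pi_S al p m'). unfold Nf. f_equal. unfold Hl. cbn [sum_lt]. ring. }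
  rewrite E1, E2.
  apply delta_alg.
  - reflexivity.
  - apply pi_pos; auto.
  - apply lam_pos; auto.
  - apply lt_0_INR; auto.
  - apply Hh.
  - apply Hl_bounds.
  - split. apply R_nonneg. apply R_le.
  - apply stein_S1; auto.
  - apply stein_S2; auto. Qed.

Lemma g_bound : exists K, 0 < K /\ forall m, Rabs (lam al p m * g (S m)) <= K /\ Rabs (g m) <= K / (al * (1 - p)).
Proof. destruct (tail_ratio_bound al p Hal Hp) as [K [HK HB]].
  assert (Hq : 0 < al * (1 - p)) by nra.
  assert (A : forall m, Rabs (lam al p m * g (S m)) <= K).
  { intros m. assert (L := lam_pos al p Hal Hp m). assert (P := pi_pos al p Hal Hp m).
    unfold g. replace (lam al p m * (Nf m / (lam al p m * pi al p m))) with (Nf m / pi al p m) by (field; lra).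
    unfold Rdiv. rewrite Rabs_mult. rewrite (Rabs_right (/ pi al p m)) by (left; apply Rinv_0_lt_compat; auto).
    eapply Rle_trans; [|apply (HB m)]. unfold Rdiv. apply Rmult_le_compat_r. left; apply Rinv_0_lt_compat; auto.
    apply Nf_bound. }
  exists K. split; auto. intros m. split. apply A.
  destruct m as [|m]. simpl. rewrite Rabs_R0. apply Rdiv_le_0_compat; lra.
  specialize (A m). assert (L : (1 - p) * al <= lam al p m) by (unfold lam; assert (0 <= INR m) by apply pos_INR; nra). assert (L' := lam_pos al p Hal Hp m).
  rewrite Rabs_mult, Rabs_right in A by lra.
  apply Rmult_le_reg_l with (al * (1 - p)). auto.
  replace (al * (1 - p) * (K / (al * (1 - p)))) with K by (field; lra).
  assert (0 <= Rabs (g (S m))) by apply Rabs_pos. nra. Qed.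

End SteinSol.

Lemma lim_sum_lt K (r : nat -> nat -> R) :
  (forall k, is_lim_seq (fun N => r N k) 0) -> is_lim_seq (fun N => sum_lt K (fun k => Rabs (r N k))) 0.
Proof. intros H. induction K; simpl.
  apply is_lim_seq_const.
  replace (Finite 0) with (Finite (0 + 0)) by (f_equal; ring).
  apply is_lim_seq_plus'. auto.
  replace 0 with (Rabs 0) by apply Rabs_R0. apply (is_lim_seq_abs _ 0). auto. Qed.

Lemma dom_conv (r : nat -> nat -> R) (W : nat -> R) :
  (forall N k, Rabs (r N k) <= W k) -> ex_series W ->
  (forall k, is_lim_seq (fun N => r N k) 0) ->
  is_lim_seq (fun N => Series (r N)) 0.
Proof. intros Hb HW Hl.
  assert (W0 : forall k, 0 <= W k). { intros k. eapply Rle_trans. apply Rabs_pos. apply (Hb O). }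
  assert (Hr : forall N, ex_series (r N)).
  { intros N. apply ex_series_Rabs. apply (ex_series_abs_le _ W); auto. }
  destruct HW as [SW HW].
  apply is_lim_seq_spec. intros eps.
  assert (Ht := is_series_lim _ _ HW). apply is_lim_seq_spec in Ht.
  assert (he : 0 < eps / 2) by (destruct eps; simpl; lra).
  destruct (Ht (mkposreal _ he)) as [K HK]. specialize (HK K (le_n K)). simpl in HK.
  assert (Hf := lim_sum_lt K r Hl). apply is_lim_seq_spec in Hf.
  destruct (Hf (mkposreal _ he)) as [N0 HN0].
  exists N0. intros N HN. specialize (HN0 N HN). simpl in HN0.
  rewrite Rminus_0_r in *.
  assert (Hs := is_series_shift (r N) K _ (is_series_Series _ (Hr N))).
  assert (Hw := is_series_shift W K _ HW).
  assert (Tail : Rabs (Series (r N) - sum_lt K (r N)) <= SW - sum_lt K W).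
  { rewrite <- (is_series_unique _ _ Hs). apply series_abs_le with (fun k => W (K + k)%nat).
    intros; apply Hb. auto. }
  assert (Fin := sum_lt_abs K (r N)).
  assert (SWK : SW - sum_lt K W < eps / 2).
  { rewrite Rabs_minus_sym in HK. rewrite Rabs_right in HK. lra.
    apply Rle_ge. assert (X := partial_le_total W SW K HW (fun k _ => W0 k)). lra. }
  rewrite Rabs_right in HN0 by (apply Rle_ge, sum_lt_nonneg; intros; apply Rabs_pos).
  replace (Series (r N)) with ((Series (r N) - sum_lt K (r N)) + sum_lt K (r N)) by ring.
  eapply Rle_lt_trans. apply Rabs_triang. destruct eps; simpl in *. lra. Qed.

Lemma term_le_series f l m : is_series f l -> (forall k, 0 <= f k) -> f m <= l.
Proof. intros H Hp. assert (X := partial_le_total f l (S m) H (fun k _ => Hp k)). simpl in X.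
  assert (0 <= sum_lt m f) by (apply sum_lt_nonneg; auto). lra. Qed.

Lemma fubini (w : nat -> nat -> R) (W : nat -> R) :
  (forall k, ex_series (fun m => Rabs (w k m))) ->
  (forall k, Series (fun m => Rabs (w k m)) <= W k) -> ex_series W ->
  (forall m, ex_series (fun k => w k m)) /\
  is_series (fun m => Series (fun k => w k m)) (Series (fun k => Series (fun m => w k m))).
Proof. intros Ha Hb HW.
  assert (Hwm : forall k m, Rabs (w k m) <= W k).
  { intros k m. eapply Rle_trans; [|apply Hb]. apply (term_le_series (fun m => Rabs (w k m))).
    apply is_series_Series; auto. intros; apply Rabs_pos. }
  assert (Ex : forall m, ex_series (fun k => w k m)).
  { intros m. apply ex_series_Rabs. apply (ex_series_abs_le _ W); auto. }
  split; auto.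
  set (s := fun k => Series (fun m => w k m)).
  assert (Hs : forall k, Rabs (s k) <= W k).
  { intros k. unfold s. eapply Rle_trans; [|apply Hb]. apply Series_Rabs. auto. }
  assert (Es : ex_series s). { apply ex_series_Rabs. apply (ex_series_abs_le _ W); auto. }
  apply lim_is_series.
  set (r := fun N k => s k - sum_lt N (fun m => w k m)).
  assert (Hr : forall N, is_series (r N) (Series s - sum_lt N (fun m => Series (fun k => w k m)))).
  { intros N. apply (is_series_minus s (fun k => sum_lt N (fun m => w k m))).
    apply is_series_Series; auto.
    apply (is_series_sum_lt N (fun m k => w k m)). intros; apply is_series_Series; auto. }
  assert (D : is_lim_seq (fun N => Series (r N)) 0).
  { apply dom_conv with (fun k => 2 * W k).
    - intros N k. unfold r. unfold Rminus. eapply Rle_trans. apply Rabs_triang. rewrite Rabs_Ropp.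
      assert (X := sum_lt_abs N (fun m => w k m)).
      assert (Y := partial_le_total (fun m => Rabs (w k m)) _ N (is_series_Series _ (Ha k)) (fun m _ => Rabs_pos _)).
      specialize (Hs k). specialize (Hb k). lra.
    - destruct HW as [lw HW]. exists (2 * lw). apply (is_series_scal (V:=R_NormedModule) 2 W lw HW).
    - intros k. unfold r. replace 0 with (s k - s k) by ring. apply is_lim_seq_minus'. apply is_lim_seq_const.
      apply is_series_lim. apply is_series_Series. apply ex_series_Rabs. auto. }
  apply is_lim_seq_ext with (fun N => Series s - Series (r N)).
  { intros N. rewrite (is_series_unique _ _ (Hr N)). ring. }
  replace (Finite (Series s)) with (Finite (Series s - 0)) by (f_equal; ring). apply is_lim_seq_minus'. apply is_lim_seq_const. auto. Qed.

Lemma lim0_bounded (u : nat -> R) : is_lim_seq u 0 -> exists M, forall n, Rabs (u n) <= M.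
Proof. intros H. apply is_lim_seq_spec in H. destruct (H (mkposreal 1 Rlt_0_1)) as [N HN].
  exists (1 + sum_lt N (fun k => Rabs (u k))). intros n.
  assert (Hs : forall m, 0 <= sum_lt m (fun k => Rabs (u k))) by (intros; apply sum_lt_nonneg; intros; apply Rabs_pos).
  destruct (le_lt_dec N n) as [Hn|Hn].
  - specialize (HN n Hn). simpl in HN. rewrite Rminus_0_r in HN. specialize (Hs N). lra.
  - assert (Z : forall m, (n < m)%nat -> Rabs (u n) <= sum_lt m (fun k => Rabs (u k))).
    { intros m Hm. induction Hm. simpl. specialize (Hs n). lra. simpl. assert (0 <= Rabs (u m)) by apply Rabs_pos. lra. }
    specialize (Z N Hn). lra. Qed.

Lemma rad_of_ex a x : ex_pseries a x -> Rbar_le (Rabs x) (CV_radius a).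
Proof. intros H. apply ex_pseries_R in H. apply ex_series_lim_0 in H.
  destruct (lim0_bounded _ H) as [M HM].
  destruct (CV_radius_bounded a) as [Hub _]. apply Hub. exists M. intros n.
  rewrite Rabs_mult. rewrite <- RPow_abs. rewrite Rabs_Rabsolu. rewrite RPow_abs. rewrite <- Rabs_mult. apply HM. Qed.

Lemma rad_lt a r : (forall z, Rabs z < r -> ex_pseries a z) -> forall z, Rabs z < r -> Rbar_lt (Rabs z) (CV_radius a).
Proof. intros H z Hz. set (z' := (Rabs z + r) / 2).
  assert (Hz0 := Rabs_pos z).
  assert (Hz' : Rabs z' = z') by (apply Rabs_right; unfold z'; lra).
  assert (Hzr : Rabs z' < r). { rewrite Hz'. unfold z'. lra. }
  assert (Hle := rad_of_ex a z' (H z' Hzr)). rewrite Hz' in Hle.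
  destruct (CV_radius a) as [c| |]; simpl in *; unfold z' in *; try lra; auto. Qed.

Lemma is_derive_val (f : R -> R) x l l' : is_derive f x l -> l = l' -> is_derive f x l'.
Proof. intros H E; subst; auto. Qed.

Lemma rad_ge1 (u : nat -> R) : is_series u 1 -> (forall m, 0 <= u m) -> forall z, Rabs z < 1 -> Rbar_lt (Rabs z) (CV_radius u).
Proof. intros H Hp z Hz. assert (R1 : Rbar_le (Rabs 1) (CV_radius u)).
  { apply rad_of_ex. apply ex_pseries_R. exists 1. apply (is_series_ext u). intros; rewrite pow1. symmetry; apply Rmult_1_r. exact H. }
  rewrite Rabs_R1 in R1. destruct (CV_radius u) as [c| |]; simpl in *; auto. lra. Qed.

Lemma PSeries_delta0 t : PSeries delta0 t = 1.
Proof. unfold PSeries. apply is_series_unique.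
  assert (H := is_series_finite_supp (fun k => delta0 k * t ^ k) 1).
  simpl in H. assert (E : 0 + 1 * 1 = 1) by ring. rewrite E in H. apply H. intros k Hk.
  destruct k. lia. simpl. ring. Qed.

Section Ysum.
Variable n : nat.
Variables (f : nat -> nat -> R) (a : nat -> nat -> R).
Hypothesis Hpmf : forall i, (i < n)%nat -> is_pmf (f i).
Hypothesis HG : forall i, (i < n)%nat ->
     exists r, 0 < r /\
       forall z, Rabs z < r ->
         pgf (f i) z <> 0 /\
         ex_pseries (fun m => a i (S m)) z /\
         Derive (pgf (f i)) z / pgf (f i) z = PSeries (fun m => a i (S m)) z.

Lemma y_pmf k : (k <= n)%nat -> (forall m, 0 <= pmf_sum f k m) /\ is_series (pmf_sum f k) 1.
Proof. induction k; intros Hk.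
  - split. intros m; destruct m; simpl; lra.
    change (pmf_sum f 0) with delta0.
    replace 1 with (sum_lt 1 delta0) by (simpl; ring). apply is_series_finite_supp.
    intros m Hm; destruct m; [lia|reflexivity].
  - destruct (IHk ltac:(lia)) as [Hp Hs]. destruct (Hpmf k ltac:(lia)) as [Fp Fs].
    split.
    + intros m. change (pmf_sum f (S k) m) with (conv (pmf_sum f k) (f k) m). unfold conv.
      rewrite sum_f_R0_lt. apply sum_lt_nonneg. intros j _. apply Rmult_le_pos; auto.
    + replace 1 with (1 * 1) by ring.
      change (pmf_sum f (S k)) with (conv (pmf_sum f k) (f k)). unfold conv.
      apply is_series_mult_pos; auto. Qed.

Lemma y_rad k z : (k <= n)%nat -> Rabs z < 1 -> Rbar_lt (Rabs z) (CV_radius (pmf_sum f k)).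
Proof. intros Hk Hz. destruct (y_pmf k Hk). apply rad_ge1; auto. Qed.

Lemma f_rad i z : (i < n)%nat -> Rabs z < 1 -> Rbar_lt (Rabs z) (CV_radius (f i)).
Proof. intros Hi Hz. destruct (Hpmf i Hi). apply rad_ge1; auto. Qed.

Lemma y_deriv k : (k <= n)%nat -> exists r, 0 < r /\ r <= 1 /\ forall z, Rabs z < r ->
   (forall i, (i < k)%nat -> Rbar_lt (Rabs z) (CV_radius (fun m => a i (S m)))) /\
   is_derive (PSeries (pmf_sum f k)) z
     (PSeries (pmf_sum f k) z * sum_lt k (fun i => PSeries (fun m => a i (S m)) z)).
Proof. induction k; intros Hk.
  - exists 1. split; [lra|split;[lra|]]. intros z Hz. split. intros; lia.
    change (pmf_sum f 0) with delta0.
    apply is_derive_val with 0.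
    apply (is_derive_ext (fun _ => 1)). intros; rewrite PSeries_delta0; auto.
    apply is_derive_Reals. apply derivable_pt_lim_const.
    simpl. ring.
  - destruct (IHk ltac:(lia)) as [r1 [Hr1 [Hr1' Hd]]].
    destruct (HG k ltac:(lia)) as [r2 [Hr2 Hf]].
    exists (Rmin r1 r2). split. apply Rmin_pos; auto. split. eapply Rle_trans. apply Rmin_l. auto.
    intros z Hz. assert (Hz1 : Rabs z < r1) by (eapply Rlt_le_trans; [exact Hz|apply Rmin_l]).
    assert (Hz2 : Rabs z < r2) by (eapply Rlt_le_trans; [exact Hz|apply Rmin_r]).
    assert (Hz0 : Rabs z < 1) by lra.
    destruct (Hd z Hz1) as [Hrad D1].
    destruct (Hf z Hz2) as [Hnz [Hex HGz]].
    split.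
    + intros i Hi. destruct (Nat.eq_dec i k) as [->|Hik]. apply rad_lt with r2; auto.
      intros; apply Hf; auto. apply Hrad. lia.
    + assert (D2 : is_derive (PSeries (f k)) z (PSeries (f k) z * PSeries (fun m => a k (S m)) z)).
      { apply is_derive_val with (Derive (PSeries (f k)) z).
        apply Derive_correct. apply ex_derive_PSeries. apply f_rad. lia. auto.
        unfold pgf in *. rewrite <- HGz. unfold Rdiv. rewrite Rmult_comm, Rmult_assoc, Rinv_l by auto. symmetry; apply Rmult_1_r. }
      assert (D := is_derive_mult _ _ _ _ _ D1 D2 (fun n m => Rmult_comm n m)).
      apply is_derive_Reals in D. apply is_derive_Reals.
      assert (Eq : forall t, Rabs t < 1 -> PSeries (pmf_sum f (S k)) t = PSeries (pmf_sum f k) t * PSeries (f k) t).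
      { intros t Ht. change (pmf_sum f (S k)) with (PS_mult (pmf_sum f k) (f k)).
        apply PSeries_mult. apply y_rad; auto; lia. apply f_rad; auto; lia. }
      apply is_derive_Reals. apply is_derive_Reals in D.
      apply is_derive_val with (plus (mult (PSeries (pmf_sum f k) z * sum_lt k (fun i => PSeries (fun m => a i (S m)) z)) (PSeries (f k) z))
         (mult (PSeries (pmf_sum f k) z) (PSeries (f k) z * PSeries (fun m => a k (S m)) z))).
      2:{ rewrite Eq by auto. unfold plus, mult; simpl. unfold mult; simpl. simpl sum_lt. ring. }
      eapply is_derive_ext_loc. 2: exact D.
      assert (He : 0 < 1 - Rabs z) by lra.
      exists (mkposreal _ He). intros t Ht. simpl. rewrite Eq. reflexivity.
      unfold ball in Ht; simpl in Ht. unfold AbsRing_ball, abs, minus, plus, opp in Ht; simpl in Ht.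
      replace (t + - z) with (t - z) in Ht by ring. assert (X := Rabs_triang_inv t z). lra. Qed.

Definition Ap m := sum_lt n (fun i => a i (S m)).

Lemma coef_id : forall m, INR (S m) * pmf_sum f n (S m) = sum_f_R0 (fun k => Ap k * pmf_sum f n (m - k)) m.
Proof.
  destruct (y_deriv n (le_n n)) as [r [Hr [Hr1 Hd]]].
  assert (HA : forall z, Rabs z < r -> is_pseries Ap z (sum_lt n (fun i => PSeries (fun m => a i (S m)) z))).
  { intros z Hz. destruct (Hd z Hz) as [Hrad _]. apply is_pseries_R.
    apply is_series_ext with (fun k => sum_lt n (fun i => a i (S k) * z ^ k)).
    { intros k. unfold Ap. rewrite Rmult_comm. rewrite <- sum_lt_scal. apply sum_lt_ext. intros; ring. }
    apply (is_series_sum_lt n (fun i k => a i (S k) * z ^ k)). intros i Hi.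
    apply is_pseries_R. apply PSeries_correct. apply CV_radius_inside. apply Hrad; auto. }
  assert (HAr : forall z, Rabs z < r -> Rbar_lt (Rabs z) (CV_radius Ap)).
  { apply rad_lt. intros z Hz. eexists. apply HA; auto. }
  assert (Hyr : forall z, Rabs z < r -> Rbar_lt (Rabs z) (CV_radius (pmf_sum f n))).
  { intros z Hz. apply y_rad; auto. lra. }
  assert (Heq : forall z, Rabs z < r -> PSeries (PS_derive (pmf_sum f n)) z = PSeries (PS_mult Ap (pmf_sum f n)) z).
  { intros z Hz. destruct (Hd z Hz) as [_ D].
    rewrite PSeries_mult by auto.
    rewrite <- (is_derive_unique _ _ _ (is_derive_PSeries (pmf_sum f n) z (Hyr z Hz))).
    rewrite (is_derive_unique _ _ _ D). rewrite (is_pseries_unique _ _ _ (HA z Hz)). ring. }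
  intros m. apply (PSeries_ext_recip (PS_derive (pmf_sum f n)) (PS_mult Ap (pmf_sum f n)) m).
  - rewrite CV_radius_derive. replace (Finite 0) with (Finite (Rabs 0)) by (rewrite Rabs_R0; auto).
    apply Hyr. rewrite Rabs_R0; auto.
  - assert (Hr2 : Rabs (r / 2) < r) by (rewrite Rabs_right; lra).
    assert (X := rad_of_ex _ _ (ex_pseries_mult Ap (pmf_sum f n) (r/2) (HAr _ Hr2) (Hyr _ Hr2))).
    rewrite Rabs_right in X by lra. destruct (CV_radius (PS_mult Ap (pmf_sum f n))); simpl in *; auto. lra.
  - exists (mkposreal r Hr). intros t Ht. apply Heq.
    unfold ball in Ht; simpl in Ht. unfold AbsRing_ball, abs, minus, plus, opp in Ht; simpl in Ht.
    change (Rabs ((t:R) + - 0) < r) in Ht. rewrite Ropp_0, Rplus_0_r in Ht. auto. Qed.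

Lemma Ap_series : (forall i, (i < n)%nat -> ex_series (fun m => a i (S m))) ->
  is_series Ap (sum_lt n (fun i => Series (fun m => a i (S m)))).
Proof. intros H. apply (is_series_sum_lt n (fun i m => a i (S m))). intros; apply is_series_Series; auto. Qed.

End Ysum.

Definition ind (j : nat) (u : nat -> R) (m : nat) : R := if (j <? m)%nat then u (m - 1 - j)%nat else 0.

Lemma shift_series (u : nat -> R) j l : is_series u l -> is_series (ind j u) l.
Proof. intros H. apply (is_series_decr_n (ind j u) (S j) l). lia.
  assert (E : sum_n (ind j u) (Init.Nat.pred (S j)) = 0).
  { rewrite sum_n_lt. simpl Init.Nat.pred. rewrite <- (sum_lt_zero (S j)). apply sum_lt_ext.
    intros k Hk. unfold ind. destruct (Nat.ltb_spec j k). lia. auto. }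
  match goal with |- is_series _ ?x => replace x with l end.
  apply (is_series_ext u). intros k. unfold ind.
  destruct (Nat.ltb_spec j (S j + k)). f_equal. lia. lia. auto.
  change (l = l + - (sum_n (ind j u) (Init.Nat.pred (S j)))). rewrite E. rewrite Ropp_0. symmetry. apply Rplus_0_r. Qed.

Lemma ind_le j u m : (forall k, 0 <= u k) -> 0 <= ind j u m.
Proof. intros H. unfold ind. destruct (j <? m)%nat; auto. lra. Qed.

Lemma eqR (x y : R) : x = y -> x = y. Proof. auto. Qed.
Ltac rr := apply eqR; cbv [plus opp scal mult minus]; simpl; try (unfold mult; simpl); ring.

Section Main.
Variable n : nat.
Variables (f : nat -> nat -> R) (a : nat -> nat -> R) (al p : R).
Hypothesis Hpmf : forall i, (i < n)%nat -> is_pmf (f i).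
Hypothesis HG : forall i, (i < n)%nat ->
     exists r, 0 < r /\
       forall z, Rabs z < r ->
         pgf (f i) z <> 0 /\
         ex_pseries (fun m => a i (S m)) z /\
         Derive (pgf (f i)) z / pgf (f i) z = PSeries (fun m => a i (S m)) z.
Hypothesis Hex : forall i, (i < n)%nat -> ex_series (fun m => a i (S m)).
Hypothesis Hal : 0 < al.
Hypothesis Hp : 0 < p < 1.
Hypothesis Hmu : al * (1 - p) / p = sum_lt n (fun i => Series (fun m => a i (S m))).
Hypothesis HB : forall i, (i < n)%nat ->
     ex_series (fun k => INR (S k) * Rabs (a i (S (S k)) - (1 - p) * a i (S k))).

Local Notation y := (pmf_sum f n).
Local Notation PI := (pi al p).
Local Notation A := (Ap n a).
Definition mu := sum_lt n (fun i => Series (fun m => a i (S m))).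
Definition bb j := A (S j) - (1 - p) * A j.
Definition Bi i j := INR (S j) * Rabs (a i (S (S j)) - (1 - p) * a i (S j)).
Definition WW j := sum_lt n (fun i => Bi i j).
Definition Btot := sum_lt n (fun i => Series (Bi i)).

Lemma F_y : (forall m, 0 <= y m) /\ is_series y 1.
Proof. apply (y_pmf n f Hpmf n (le_n n)). Qed.

Lemma F_mu : (1 - p) * al = p * mu.
Proof. unfold mu. rewrite <- Hmu. field. lra. Qed.

Lemma F_A : is_series A mu.
Proof. apply Ap_series; auto. Qed.

Lemma F_W : is_series WW Btot.
Proof. apply (is_series_sum_lt n Bi). intros i Hi. apply is_series_Series. apply HB; auto. Qed.

Lemma F_bW j : INR (S j) * Rabs (bb j) <= WW j.
Proof. unfold bb, WW, Bi, Ap.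
  replace (sum_lt n (fun i => a i (S (S j))) - (1 - p) * sum_lt n (fun i => a i (S j)))
    with (sum_lt n (fun i => a i (S (S j)) - (1 - p) * a i (S j))).
  assert (X := sum_lt_abs n (fun i => a i (S (S j)) - (1 - p) * a i (S j))).
  assert (0 < INR (S j)) by (apply lt_0_INR; lia).
  rewrite sum_lt_scal. apply Rmult_le_compat_l; lra.
  rewrite sum_lt_minus, sum_lt_scal. auto. Qed.

Lemma W_nonneg j : 0 <= WW j.
Proof. apply sum_lt_nonneg. intros. unfold Bi. apply Rmult_le_pos. apply pos_INR. apply Rabs_pos. Qed.

Lemma F_babs j : Rabs (bb j) <= WW j.
Proof. assert (X := F_bW j). assert (1 <= INR (S j)) by (rewrite S_INR; assert (0 <= INR j) by apply pos_INR; lra).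
  assert (0 <= Rabs (bb j)) by apply Rabs_pos. nra. Qed.

Lemma F_bsum : is_series bb (p * mu - A 0).
Proof.
  assert (H1 : is_series (fun j => A (S j)) (mu - A 0)).
  { apply is_series_incr_1. match goal with |- is_series _ ?x => replace x with mu end. apply F_A.
    change (mu = mu - A 0 + A 0). ring. }
  assert (H2 := is_series_scal (V:=R_NormedModule) (1 - p) A mu F_A).
  assert (H3 := is_series_minus _ _ _ _ H1 H2).
  match type of H3 with is_series _ ?x => replace x with (p * mu - A 0) in H3 end.
  apply (is_series_ext _ _ _ (fun j => eq_refl) H3).
  change (p * mu - A 0 = mu - A 0 + - ((1 - p) * mu)). ring. Qed.

Lemma F_my m : INR m * y m = sum_lt m (fun k => A k * y (m - 1 - k)%nat).
Proof. destruct m as [|m]. simpl. ring.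
  rewrite (coef_id n f a Hpmf HG m). rewrite sum_f_R0_lt. apply sum_lt_ext. intros k Hk.
  f_equal. f_equal. lia. Qed.

Lemma F_Dform m : lam al p m * y m - INR (S m) * y (S m)
   = (p * mu - A 0) * y m - sum_lt m (fun j => bb j * y (m - 1 - j)%nat).
Proof.
  assert (C := coef_id n f a Hpmf HG m). rewrite sum_f_R0_lt, sum_lt_first in C.
  replace (m - 0)%nat with m in C by lia.
  rewrite (sum_lt_ext m _ (fun k => A (S k) * y (m - 1 - k)%nat)) in C by (intros; f_equal; f_equal; lia).
  assert (My := F_my m). assert (Mu := F_mu).
  assert (Eb : sum_lt m (fun j => bb j * y (m - 1 - j)%nat) =
     sum_lt m (fun k => A (S k) * y (m - 1 - k)%nat) - (1 - p) * sum_lt m (fun k => A k * y (m - 1 - k)%nat)).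
  { rewrite <- sum_lt_scal, <- sum_lt_minus. apply sum_lt_ext. intros; unfold bb; ring. }
  rewrite Eb, C, <- My. unfold lam.
  replace ((1 - p) * (al + INR m) * y m) with ((1 - p) * al * y m + (1 - p) * (INR m * y m)) by ring.
  rewrite Mu. ring. Qed.

Definition hh m := if Rle_dec (PI m) (y m) then 1 else 0.
Lemma Hh : forall k, 0 <= hh k <= 1.
Proof. intros k. unfold hh. destruct (Rle_dec _ _); lra. Qed.

Local Notation gg := (g al p hh).

Lemma F_tele k t : Rabs (gg (S k) - gg (S k + t)%nat) <= INR t / (al * (1 - p)).
Proof. induction t.
  - replace (S k + 0)%nat with (S k) by lia. unfold Rminus. rewrite Rplus_opp_r, Rabs_R0. simpl.
    unfold Rdiv; rewrite Rmult_0_l; lra.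
  - replace (gg (S k) - gg (S k + S t)%nat) with ((gg (S k) - gg (S k + t)%nat) + -(gg (S (S k + t)) - gg (S k + t)%nat)).
    2:{ replace (S k + S t)%nat with (S (S k + t)) by lia. ring. }
    eapply Rle_trans. apply Rabs_triang. rewrite Rabs_Ropp.
    assert (X := stein_delta al p Hal Hp hh Hh (S k + t) ltac:(lia)).
    rewrite S_INR. unfold Rdiv in *. lra. Qed.

Lemma G_exists : exists K G, 0 < K /\ 0 <= G /\ (forall m, Rabs (lam al p m * gg (S m)) <= K) /\ (forall m, Rabs (gg m) <= G).
Proof. destruct (g_bound al p Hal Hp hh Hh) as [K [HK HB']].
  exists K, (K / (al * (1 - p))). split; auto. split. apply Rdiv_le_0_compat. lra. nra.
  split; intros m; apply HB'. Qed.

Lemma ex_bounded_y (u : nat -> R) G : (forall m, Rabs (u m) <= G) -> ex_series (fun m => y m * u m).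
Proof. intros H. destruct F_y as [Yp Ys]. apply ex_series_Rabs.
  apply (ex_series_abs_le _ (fun m => G * y m)). intros m. rewrite Rabs_mult, Rabs_right by (apply Rle_ge; auto).
  specialize (H m). specialize (Yp m). nra. exists (G * 1). apply (is_series_scal (V:=R_NormedModule) G y 1 Ys). Qed.

Lemma main_L : exists L : R, is_series (fun m => (lam al p m * y m - INR (S m) * y (S m)) * gg (S m)) L
   /\ Rabs L <= Btot / (al * (1 - p)).
Proof.
  destruct G_exists as [K [G [HK [HG0 [HKb HGb]]]]].
  destruct F_y as [Yp Ys].
  assert (Hq : 0 < al * (1 - p)) by nra.
  set (E0 := Series (fun m => y m * gg (S m))).
  set (Ej := fun j => Series (fun k => y k * gg (S (S j + k)))).
  assert (HE0 : is_series (fun m => y m * gg (S m)) E0).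
  { apply is_series_Series. apply ex_bounded_y with G. auto. }
  assert (HEj : forall j, is_series (fun k => y k * gg (S (S j + k))) (Ej j)).
  { intros j. apply is_series_Series. apply ex_bounded_y with G. auto. }
  set (w := fun j m => bb j * ((y m - ind j y m) * gg (S m))).
  assert (Row : forall j, is_series (w j) (bb j * (E0 - Ej j))).
  { intros j. apply (is_series_scal (V:=R_NormedModule) (bb j)).
    assert (H2 : is_series (fun m => ind j y m * gg (S m)) (Ej j)).
    { apply (is_series_ext (ind j (fun k => y k * gg (S (S j + k))))).
      intros m. unfold ind. destruct (Nat.ltb_spec j m). replace (S (S j + (m - 1 - j))) with (S m) by lia. reflexivity. rr.
      apply shift_series. auto. }
    assert (H3 := is_series_minus _ _ _ _ HE0 H2).
    eapply is_series_ext; [|exact H3]. intros m. simpl. rr. }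
  assert (Hind : forall j, is_series (ind j y) 1) by (intros; apply shift_series; auto).
  assert (Wb : forall j m, Rabs (w j m) <= Rabs (bb j) * G * (y m + ind j y m)).
  { intros j m. unfold w. rewrite !Rabs_mult. assert (I0 := ind_le j y m Yp).
    assert (R1 : Rabs (y m - ind j y m) <= y m + ind j y m).
    { unfold Rminus. eapply Rle_trans. apply Rabs_triang. rewrite Rabs_Ropp, !Rabs_right; try lra. specialize (Yp m); lra. }
    assert (0 <= Rabs (bb j)) by apply Rabs_pos. specialize (HGb (S m)). assert (0 <= Rabs (gg (S m))) by apply Rabs_pos.
    assert (0 <= Rabs (y m - ind j y m)) by apply Rabs_pos.
    rewrite Rmult_assoc. apply Rmult_le_compat_l. auto. nra. }
  assert (Wbs : forall j, is_series (fun m => Rabs (bb j) * G * (y m + ind j y m)) (Rabs (bb j) * G * (1 + 1))).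
  { intros j. apply (is_series_scal (V:=R_NormedModule) (Rabs (bb j) * G)). apply (is_series_plus y (ind j y)); auto. }
  assert (Fub := fubini w (fun j => 2 * G * WW j)).
  destruct Fub as [Col Fub].
  { intros j. apply (ex_series_abs_le _ _ (Wb j)). eexists; apply Wbs. }
  { intros j. apply Rle_trans with (Rabs (bb j) * G * (1 + 1)).
    apply (series_le (fun m => Rabs (w j m)) _ _ _ (is_series_Series _ (ex_series_abs_le _ _ (Wb j) (ex_intro _ _ (Wbs j)))) (Wbs j)).
    intros; apply Wb. assert (X := F_babs j). nra. }
  { exists (2 * G * Btot). apply (is_series_scal (V:=R_NormedModule) (2 * G) WW Btot F_W). }
  assert (ColS : forall m, is_series (fun j => w j m) ((lam al p m * y m - INR (S m) * y (S m)) * gg (S m))).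
  { intros m. rewrite F_Dform.
    assert (C1 := is_series_scal_r (y m) bb _ F_bsum).
    assert (C2 : is_series (fun j => bb j * ind j y m) (sum_lt m (fun j => bb j * y (m - 1 - j)%nat))).
    { rewrite (sum_lt_ext m _ (fun j => bb j * ind j y m)).
      apply is_series_finite_supp. intros k Hk. unfold ind. destruct (Nat.ltb_spec k m). lia. ring.
      intros k Hk. unfold ind. destruct (Nat.ltb_spec k m). auto. lia. }
    assert (C3 := is_series_minus _ _ _ _ C1 C2).
    assert (C4 := is_series_scal_r (gg (S m)) _ _ C3).
    eapply is_series_ext; [|exact C4]. intros j. unfold w. simpl. rr. }
  exists (Series (fun j => Series (fun m => w j m))). split.
  - apply (is_series_ext (fun m => Series (fun j => w j m))). intros m. apply is_series_unique. apply ColS. auto.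
  - assert (EL : Series (fun j => Series (fun m => w j m)) = Series (fun j => bb j * (E0 - Ej j))).
    { apply Series_ext. intros j. apply is_series_unique. apply Row. }
    rewrite EL.
    apply series_abs_le with (fun j => WW j / (al * (1 - p))).
    + intros j. rewrite Rabs_mult.
      assert (D : Rabs (E0 - Ej j) <= INR (S j) / (al * (1 - p))).
      { assert (HD := is_series_minus _ _ _ _ HE0 (HEj j)).
        assert (HD' : is_series (fun k => y k * (gg (S k) - gg (S (S j + k)))) (E0 - Ej j)).
        { eapply is_series_ext; [|exact HD]. intros k. simpl. rr. }
        rewrite <- (is_series_unique _ _ HD').
        apply series_abs_le with (fun k => y k * (INR (S j) / (al * (1 - p)))).
        intros k. rewrite Rabs_mult, (Rabs_right (y k)) by (apply Rle_ge; auto).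
        apply Rmult_le_compat_l. auto. replace (S (S j + k)) with (S k + S j)%nat by lia. apply F_tele.
        assert (Z := is_series_scal_r (INR (S j) / (al * (1 - p))) y 1 Ys). rewrite Rmult_1_l in Z. exact Z. }
      assert (X := F_bW j). assert (0 <= Rabs (bb j)) by apply Rabs_pos.
      apply Rle_trans with (Rabs (bb j) * (INR (S j) / (al * (1 - p)))).
      apply Rmult_le_compat_l; auto.
      unfold Rdiv. rewrite <- Rmult_assoc. apply Rmult_le_compat_r. left; apply Rinv_0_lt_compat; auto. lra.
    + unfold Rdiv. apply (is_series_scal_r (/ (al * (1 - p))) WW Btot F_W). Qed.

Lemma main_final : dTV y (nb_pmf al p) <= / (al * (1 - p)) * Btot.
Proof.
  destruct main_L as [L [HL HLb]].
  destruct G_exists as [K [G [HK [HG0 [HKb HGb]]]]].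
  destruct F_y as [Yp Ys].
  assert (Hq : 0 < al * (1 - p)) by nra.
  set (ph0 := ph al p hh).
  assert (Hph : is_series (fun k => hh k * PI k) ph0) by apply (ph_series al p Hal Hp hh Hh).
  assert (Hyh : ex_series (fun m => y m * hh m)).
  { apply ex_bounded_y with 1. intros m; destruct (Hh m); rewrite Rabs_right; lra. }
  set (Syh := Series (fun m => y m * hh m)).
  assert (HSyh : is_series (fun m => y m * hh m) Syh) by (apply is_series_Series; auto).
  assert (Part : forall N, sum_lt (S N) (fun m => y m * (hh m - ph0)) =
     sum_lt N (fun m => (lam al p m * y m - INR (S m) * y (S m)) * gg (S m)) + lam al p N * y N * gg (S N)).
  { induction N.
    - cbn [sum_lt]. assert (E := stein_eq al p Hal Hp hh 0). fold ph0 in E. rewrite <- E. simpl INR. ring.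
    - change (sum_lt (S (S N)) (fun m => y m * (hh m - ph0))) with
        (sum_lt (S N) (fun m => y m * (hh m - ph0)) + y (S N) * (hh (S N) - ph0)).
      rewrite IHN. assert (E := stein_eq al p Hal Hp hh (S N)). fold ph0 in E. rewrite <- E.
      cbn [sum_lt]. ring. }
  assert (L1 : is_lim_seq (fun N => sum_lt (S N) (fun m => y m * (hh m - ph0))) (Syh - ph0)).
  { apply (is_lim_seq_incr_1 (fun N => sum_lt N (fun m => y m * (hh m - ph0)))).
    apply is_series_lim.
    assert (Z := is_series_minus _ _ _ _ HSyh (is_series_scal (V:=R_NormedModule) ph0 y 1 Ys)).
    match type of Z with is_series _ ?x => replace x with (Syh - ph0) in Z by (apply eqR; cbv [plus opp scal mult]; simpl; unfold mult; simpl; ring) end.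
    eapply is_series_ext; [|exact Z]. intros m. simpl. rr. }
  assert (L2 : is_lim_seq (fun N => lam al p N * y N * gg (S N)) 0).
  { apply is_lim_seq_abs_0.
    apply is_lim_seq_le_le with (fun _ => 0) (fun N => K * Rabs (y N)).
    intros N. split. apply Rabs_pos.
    replace (lam al p N * y N * gg (S N)) with (y N * (lam al p N * gg (S N))) by ring.
    rewrite Rabs_mult. rewrite (Rmult_comm K). apply Rmult_le_compat_l. apply Rabs_pos. apply HKb.
    apply is_lim_seq_const.
    replace (Finite 0) with (Rbar_mult K 0) by (simpl; f_equal; ring).
    apply is_lim_seq_scal_l. apply (is_lim_seq_abs_0 y). apply ex_series_lim_0. eexists; eauto. }
  assert (L3 : is_lim_seq (fun N => sum_lt (S N) (fun m => y m * (hh m - ph0))) (L + 0)).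
  { apply is_lim_seq_ext with (fun N => sum_lt N (fun m => (lam al p m * y m - INR (S m) * y (S m)) * gg (S m)) + lam al p N * y N * gg (S N)).
    intros; rewrite Part; auto.
    apply is_lim_seq_plus'. apply is_series_lim. auto. auto. }
  assert (EqL := lim_unique_R _ _ _ L1 L3).
  assert (TV : is_series (fun m => Rabs (y m - nb_pmf al p m)) (2 * (Syh - ph0))).
  { assert (Z1 := is_series_minus _ _ _ _ HSyh Hph).
    assert (Z2 := is_series_scal (V:=R_NormedModule) 2 _ _ Z1).
    assert (Z3 := is_series_minus _ _ _ _ Ys (nb_sum1 al p Hal Hp)).
    assert (Z4 := is_series_minus _ _ _ _ Z2 Z3).
    match type of Z4 with is_series _ ?x => replace x with (2 * (Syh - ph0)) in Z4 by (apply eqR; cbv [plus opp scal mult]; simpl; unfold mult; simpl; ring) end.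
    eapply is_series_ext; [|exact Z4]. intros m. simpl. apply eqR. cbv [plus opp scal mult]; simpl; unfold mult; simpl.
    unfold hh. unfold pi. destruct (Rle_dec (nb_pmf al p m) (y m)).
    rewrite Rabs_right by lra. ring. rewrite Rabs_left by lra. ring. }
  unfold dTV. rewrite (is_series_unique _ _ TV).
  replace (/ 2 * (2 * (Syh - ph0))) with L by (rewrite EqL; field).
  eapply Rle_trans. apply Rle_abs. unfold Rdiv in HLb. rewrite Rmult_comm. auto. Qed.

End Main.

Lemma final_thm (n : nat) (f : nat -> nat -> R) (a : nat -> nat -> R)
  (alpha p : R) :
  (forall i, (i < n)%nat -> is_pmf (f i)) ->
  (forall i, (i < n)%nat ->
     exists r, 0 < r /\
       forall z, Rabs z < r ->
         pgf (f i) z <> 0 /\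
         ex_pseries (fun m => a i (S m)) z /\
         Derive (pgf (f i)) z / pgf (f i) z = PSeries (fun m => a i (S m)) z) ->
  (forall i, (i < n)%nat -> ex_series (fun m => a i (S m))) ->
  0 < alpha -> 0 < p < 1 ->
  alpha * (1 - p) / p = sum_lt n (fun i => Series (fun m => a i (S m))) ->
  (forall i, (i < n)%nat ->
     ex_series (fun k => INR (S k) * Rabs (a i (S (S k)) - (1 - p) * a i (S k)))) ->
  dTV (pmf_sum f n) (nb_pmf alpha p)
    <= / (alpha * (1 - p)) *
       sum_lt n (fun i =>
         Series (fun k => INR (S k) * Rabs (a i (S (S k)) - (1 - p) * a i (S k)))).
Proof. intros H1 H2 H3 H4 H5 H6 H7. apply (main_final n f a alpha p H1 H2 H3 H4 H5 H6 H7). Qed.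


Theorem theorem3p1 (n : nat) (f : nat -> nat -> R) (a : nat -> nat -> R)
  (alpha p : R) :
  (forall i, (i < n)%nat -> is_pmf (f i)) ->
  (* G_{X_i}(z) := M'(z)/M(z) = sum_{m>=0} a_{i,m+1} z^m  near 0 *)
  (forall i, (i < n)%nat ->
     exists r, 0 < r /\
       forall z, Rabs z < r ->
         pgf (f i) z <> 0 /\
         ex_pseries (fun m => a i (S m)) z /\
         Derive (pgf (f i)) z / pgf (f i) z = PSeries (fun m => a i (S m)) z) ->
  (* mu = sum_i sum_m a_{i,m+1} is well defined *)
  (forall i, (i < n)%nat -> ex_series (fun m => a i (S m))) ->
  0 < alpha -> 0 < p < 1 ->
  alpha * (1 - p) / p = sum_lt n (fun i => Series (fun m => a i (S m))) ->
  (* the right-hand side is finite (otherwise the bound is trivial) *)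
  (forall i, (i < n)%nat ->
     ex_series (fun k => INR (S k) * Rabs (a i (S (S k)) - (1 - p) * a i (S k)))) ->
  dTV (pmf_sum f n) (nb_pmf alpha p)
    <= / (alpha * (1 - p)) *
       sum_lt n (fun i =>
         Series (fun k => INR (S k) * Rabs (a i (S (S k)) - (1 - p) * a i (S k)))).
Proof. exact (final_thm n f a alpha p). Qed.
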